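(* Let $\{w^k\}$ be generated by the L-GADMM iteration and $\{\bar w^k\}$ be the auxiliary sequence. Then for every $k\ge0$, $$(\bar w^k-\bar w^{k+1})^\top Q\big\{(w^k-w^{k+1})-(\bar w^k-\bar w^{k+1})\big\}\ge0.$$
   Context: Standing setting. Let $m\ge 2$, $\ell$, $n_1,\dots,n_m$ be positive integers. For $i=1,\dots,m$ let $\theta_i:\mathbb{R}^{n_i}\to\mathbb{R}$ be convex, $\mathcal{X}_i\subseteq\mathbb{R}^{n_i}$ nonempty closed convex, $A_i\in\mathbb{R}^{\ell\times n_i}$ of full column rank, and $b\in\mathbb{R}^\ell$. Problem (P): $\min\{\sum_{i=1}^m\theta_i(x_i):\sum_{i=1}^mA_ix_i=b,\ x_i\in\mathcal{X}_i\}$, assumed to have a nonempty solution set. Write $u=(x_1,\dots,x_m)$, $w=(x_1,\dots,x_m,y)$ with $y\in\mathbb{R}^\ell$, $\theta(u)=\sum_i\theta_i(x_i)$, $F(w)=(-A_1^\top y,\dots,-A_m^\top y,\ \sum_iA_ix_i-b)$, $\mathcal{W}=\mathcal{X}_1\times\cdots\times\mathcal{X}_m\times\mathbb{R}^\ell$, and $\mathcal{W}^*=\{w^*\in\mathcal{W}:\theta(u)-\theta(u^* )+(w-w^* )^\top F(w^* )\ge0\ \forall w\in\mathcal{W}\}$ (nonempty). For symmetric $G$, $\|v\|_G^2:=v^\top Gv$; $\|\cdot\|$ is the Euclidean norm. Vectors are partitioned as $w=(R,x_m,y)$ with $R=(x_1,\dots,x_{m-1})$. Parameters: $\rho>0$,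 $\gamma\in(0,2)$, symmetric positive definite $P_i\in\mathbb{R}^{n_i\times n_i}$ ($i=1,\dots,m$) such that $G_1\succ0$, where $G_1$ is the symmetric block matrix with diagonal blocks $P_1,\dots,P_{m-1}$ and $(i,j)$ block $-\rho A_i^\top A_j$ for $i\ne j$, $1\le i,j\le m-1$. Matrices (w.r.t. the partition $(R,x_m,y)$): $Q=\begin{pmatrix}G_1&0&0\\0&\rho A_m^\top A_m+P_m&(1-\gamma)A_m^\top\\0&-A_m&\frac1\rho I_\ell\end{pmatrix}$, $M=\begin{pmatrix}I&0&0\\0&I_{n_m}&0\\0&-\rho A_m&\gamma I_\ell\end{pmatrix}$, $H=\begin{pmatrix}G_1&0&0\\0&P_m+\frac\rho\gamma A_m^\top A_m&\frac{1-\gamma}\gamma A_m^\top\\0&\frac{1-\gamma}\gamma A_m&\frac1{\gamma\rho}I_\ell\end{pmatrix}$, $N=Q^\top+Q-M^\top HM$. L-GADMM iteration: from an arbitrary $w^0=(x_1^0,\dots,x_m^0,y^0)\in\mathcal{W}$, for $k=0,1,2,\dots$: $x_j^{k+1}=\arg\min_{x_j\in\mathcal{X}_j}\{\theta_j(x_j)+\frac\rho2\|A_jx_j+\sum_{i=1,i\ne j}^mA_ix_i^k-b-\frac{y^k}\rho\|^2+\frac12\|x_j-x_j^k\|_{P_j}^2\}$ for $j=1,\dots,m-1$; $x_m^{k+1}=\arg\min_{x_m\in\mathcal{X}_m}\{\theta_m(x_m)+\frac\rho2\|\gamma\sum_{i=1}^{m-1}A_ix_i^{k+1}+(1-\gamma)(b-A_mx_m^k)+A_mx_m-b-\frac{y^k}\rho\|^2+\frac12\|x_m-x_m^k\|_{P_m}^2\}$;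 $y^{k+1}=y^k-\rho\big(\gamma\sum_{i=1}^{m-1}A_ix_i^{k+1}+(1-\gamma)(b-A_mx_m^k)+A_mx_m^{k+1}-b\big)$. Auxiliary sequence: $\bar w^k=(\bar x_1^k,\dots,\bar x_m^k,\bar y^k)$ with $\bar x_i^k=x_i^{k+1}$ ($i=1,\dots,m$) and $\bar y^k=y^k-\rho(\sum_{i=1}^{m-1}A_ix_i^{k+1}+A_mx_m^k-b)$; $\bar u^k=(\bar x_1^k,\dots,\bar x_m^k)$, $R^k=(x_1^k,\dots,x_{m-1}^k)$, $\bar R^k=(\bar x_1^k,\dots,\bar x_{m-1}^k)$. *)

(* Defs.v *)
From HB Require Import structures.
From mathcomp Require Import all_boot all_order all_algebra.
From mathcomp Require Import all_classical all_reals all_analysis.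
Set Implicit Arguments. Unset Strict Implicit. Unset Printing Implicit Defensive.
Import Order.TTheory GRing.Theory Num.Theory.
Import numFieldNormedType.Exports.
Local Open Scope ring_scope.
Local Open Scope classical_set_scope.

Definition dotv (R : realType) (p : nat) (u v : 'cV[R]_p) : R := (u^T *m v) 0 0.

Definition sqnormG (R : realType) (p : nat) (G : 'M[R]_p) (v : 'cV[R]_p) : R :=
  dotv v (G *m v).

Definition sqnorm (R : realType) (p : nat) (v : 'cV[R]_p) : R := dotv v v.

Definition convex_fun (R : realType) (p : nat) (f : 'cV[R]_p -> R) : Prop :=
  forall (x y : 'cV[R]_p) (t : R), 0 <= t -> t <= 1 ->
    f (t *: x + (1 - t) *: y) <= t * f x + (1 - t) * f y.

Definition spd (R : realType) (p : nat) (P : 'M[R]_p) : Prop :=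
  P^T = P /\ forall v : 'cV[R]_p, v != 0 -> 0 < sqnormG P v.

Definition lastIdx (m : nat) (hm : (0 < m)%N) : 'I_m :=
  Ordinal (m := m.-1) (n := m) (ltac:(rewrite ltn_predL; exact hm)).

Definition blk (R : realType) (m : nat) (n : 'I_m -> nat) :=
  forall i : 'I_m, 'cV[R]_(n i).

Definition Asum (R : realType) (m l : nat) (n : 'I_m -> nat)
  (A : forall i : 'I_m, 'M[R]_(l, n i)) (x : blk R n) : 'cV[R]_l :=
  \sum_(i < m) A i *m x i.

(* sum_{i=1}^{m-1} A_i x_i *)
Definition Asum_R (R : realType) (m l : nat) (n : 'I_m -> nat)
  (A : forall i : 'I_m, 'M[R]_(l, n i)) (x : blk R n) : 'cV[R]_l :=
  \sum_(i < m | (i < m.-1)%N) A i *m x i.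

Definition Asum_but (R : realType) (m l : nat) (n : 'I_m -> nat)
  (A : forall i : 'I_m, 'M[R]_(l, n i)) (j : 'I_m) (x : blk R n) : 'cV[R]_l :=
  \sum_(i < m | i != j) A i *m x i.

Definition theta_sum (R : realType) (m : nat) (n : 'I_m -> nat)
  (theta : forall i : 'I_m, 'cV[R]_(n i) -> R) (x : blk R n) : R :=
  \sum_(i < m) theta i (x i).

(* R-part bilinear form: R_v^T G1 R_u, G1 with diagonal blocks P_i and
   off-diagonal blocks -rho A_i^T A_j  (1 <= i,j <= m-1) *)
Definition G1form (R : realType) (m l : nat) (n : 'I_m -> nat)
  (A : forall i : 'I_m, 'M[R]_(l, n i)) (P : forall i : 'I_m, 'M[R]_(n i))
  (rho : R) (v u : blk R n) : R :=
  \sum_(i < m | (i < m.-1)%N)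
     (dotv (v i) (P i *m u i)
      + \sum_(j < m | (j < m.-1)%N && (j != i))
          dotv (v i) ((- rho) *: ((A i)^T *m (A j *m u j)))).

(* w_v^T Q w_u, with Q written blockwise w.r.t. the partition (R, x_m, y) *)
Definition Qform (R : realType) (m l : nat) (n : 'I_m -> nat) (hm : (0 < m)%N)
  (A : forall i : 'I_m, 'M[R]_(l, n i)) (P : forall i : 'I_m, 'M[R]_(n i))
  (rho gamma : R) (vx : blk R n) (vy : 'cV[R]_l) (ux : blk R n) (uy : 'cV[R]_l) : R :=
  let im := lastIdx hm in
  G1form A P rho vx ux
  + dotv (vx im) ((rho *: ((A im)^T *m A im) + P im) *m ux im
                  + (1 - gamma) *: ((A im)^T *m uy))
  + dotv vy (- (A im *m ux im) + rho^-1 *: uy).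

(* Main.v *)
Require Import Defs.
From HB Require Import structures.
From mathcomp Require Import all_boot all_order all_algebra.
From mathcomp Require Import all_classical all_reals all_analysis.
From mathcomp Require Import ring lra.
Set Implicit Arguments. Unset Strict Implicit. Unset Printing Implicit Defensive.
Import Order.TTheory GRing.Theory Num.Theory.
Import numFieldNormedType.Exports.
Local Open Scope ring_scope.
Local Open Scope classical_set_scope.

Section D.
Variable R : realType.
Variable p : nat.
Implicit Types u v w : 'cV[R]_p.
Lemma dotvDl u v w : dotv (u + v) w = dotv u w + dotv v w.
Proof. by rewrite /dotv linearD /= mulmxDl mxE. Qed.
Lemma dotvDr u v w : dotv u (v + w) = dotv u v + dotv u w.
Proof. by rewrite /dotv mulmxDr mxE. Qed.
Lemma dotvZl a u v : dotv (a *: u) v = a * dotv u v.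
Proof. by rewrite /dotv linearZ /= -scalemxAl mxE. Qed.
Lemma dotvZr a u v : dotv u (a *: v) = a * dotv u v.
Proof. by rewrite /dotv -scalemxAr mxE. Qed.
Lemma dotvNl u v : dotv (- u) v = - dotv u v.
Proof. by rewrite -scaleN1r dotvZl mulN1r. Qed.
Lemma dotvNr u v : dotv u (- v) = - dotv u v.
Proof. by rewrite -scaleN1r dotvZr mulN1r. Qed.
Lemma dotvBl u v w : dotv (u - v) w = dotv u w - dotv v w.
Proof. by rewrite dotvDl dotvNl. Qed.
Lemma dotvBr u v w : dotv u (v - w) = dotv u v - dotv u w.
Proof. by rewrite dotvDr dotvNr. Qed.
Lemma dotvC u v : dotv u v = dotv v u.
Proof. rewrite /dotv -[v^T *m u]trmxK trmx_mul trmxK. by rewrite [in RHS]mxE. Qed.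
Lemma dotv0r u : dotv u 0 = 0.
Proof. by rewrite /dotv mulmx0 mxE. Qed.
Lemma dotv_sumr I (r : seq I) (Pr : pred I) (F : I -> 'cV[R]_p) u :
  dotv u (\sum_(i <- r | Pr i) F i) = \sum_(i <- r | Pr i) dotv u (F i).
Proof.
exact: (big_morph (dotv u) (dotvDr u) (dotv0r u)).
Qed.
End D.
Lemma dotv_mul (R : realType) p q (M : 'M[R]_(p,q)) u v :
  dotv u (M *m v) = dotv (M^T *m u) v.
Proof. by rewrite /dotv trmx_mul trmxK mulmxA. Qed.

Lemma small_t (R : realType) (a c : R) :
  (forall t, 0 < t -> t <= 1 -> 0 <= t * a + t ^+ 2 * c) -> 0 <= a.
Proof.
move=> H; rewrite leNgt; apply/negP => a0.
set c' := `|c| + 1.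
have c'0 : 0 < c' by rewrite /c' ltr_pwDr // normr_ge0.
have cc : c <= c' by rewrite /c' ler_wpDr // ler_norm.
have d0 : 0 < 2 * c' - a by lra.
set t := - a / (2 * c' - a).
have tE : t * (2 * c' - a) = - a by rewrite /t mulfVK // gt_eqF.
have t0 : 0 < t by rewrite /t divr_gt0 // oppr_gt0.
have t1 : t <= 1 by rewrite /t ler_pdivrMr // mul1r; lra.
have := H t t0 t1.
have h1 : t ^+ 2 * c <= t ^+ 2 * c' by rewrite ler_wpM2l // exprn_ge0 // ltW.
have h2 : (a + t * c') * (2 * c' - a) = a * (c' - a) by nra.
have h3 : a * (c' - a) < 0 by nra.
have h4 : a + t * c' < 0 by nra.
nra.
Qed.

Lemma sqnormDZ (R : realType) p (u v : 'cV[R]_p) t :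
  sqnorm (u + t *: v) = sqnorm u + 2 * t * dotv u v + t ^+ 2 * sqnorm v.
Proof.
rewrite /sqnorm !(dotvDl, dotvDr, dotvZl, dotvZr) [dotv v u]dotvC; ring.
Qed.

Lemma sqnormGDZ (R : realType) p (P : 'M[R]_p) (u v : 'cV[R]_p) t : P^T = P ->
  sqnormG P (u + t *: v) = sqnormG P u + 2 * t * dotv v (P *m u) + t ^+ 2 * sqnormG P v.
Proof.
move=> PT.
have e : dotv u (P *m v) = dotv v (P *m u) by rewrite dotv_mul PT dotvC.
rewrite /sqnormG mulmxDr -scalemxAr !(dotvDl, dotvDr, dotvZl, dotvZr) e; ring.
Qed.

Lemma first_order (R : realType) p l (f : 'cV[R]_p -> R) (C : set 'cV[R]_p)
  (A : 'M[R]_(l, p)) (c : 'cV[R]_l) (P : 'M[R]_p) (x0 xs : 'cV[R]_p) (rho : R) :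
  convex_fun f -> convex_set C -> C xs -> P^T = P ->
  (forall z, C z -> f xs + rho / 2 * sqnorm (A *m xs + c) + 1 / 2 * sqnormG P (xs - x0)
     <= f z + rho / 2 * sqnorm (A *m z + c) + 1 / 2 * sqnormG P (z - x0)) ->
  forall z, C z -> 0 <= f z - f xs + rho * dotv (A *m (z - xs)) (A *m xs + c)
                       + dotv (z - xs) (P *m (xs - x0)).
Proof.
move=> fc Cc Cxs PT Hmin z Cz.
set d := z - xs.
apply: (@small_t R _ (rho / 2 * sqnorm (A *m d) + 1 / 2 * sqnormG P d)) => t t0 t1.
pose zt := t *: z + (1 - t) *: xs.
have Czt : C zt.
  have := Cc z xs (Itv01 (ltW t0) t1) (mem_set Cz) (mem_set Cxs).
  by rewrite inE.
have ztE : zt = xs + t *: d.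
  by apply/matrixP => i j; rewrite /zt /d !mxE; ring.
have fzt := fc z xs t (ltW t0) t1.
have := Hmin zt Czt.
rewrite -/zt in fzt.
have e1 : A *m zt + c = (A *m xs + c) + t *: (A *m d).
  by rewrite ztE mulmxDr -scalemxAr addrAC.
have e2 : zt - x0 = (xs - x0) + t *: d by rewrite ztE addrAC.
rewrite e1 e2 sqnormDZ sqnormGDZ //.
rewrite [dotv (A *m (z - xs)) _]dotvC -/d.
nra.
Qed.

Definition Ssub (R : realType) (m l : nat) (n : 'I_m -> nat)
  (A : forall i : 'I_m, 'M[R]_(l, n i)) (j : 'I_m) (u : blk R n) : 'cV[R]_l :=
  \sum_(i < m | (i < m.-1)%N && (i != j)) A i *m u i.

Lemma not_last m (i : 'I_m) : (0 < m)%N -> (val i != m.-1) = (i < m.-1)%N.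
Proof.
move=> m0; have := ltn_ord i; case: i => i /= hi.
move=> _; apply/idP/idP => [|h]; last by rewrite neq_ltn h.
rewrite neq_ltn => /orP [//|h]; exfalso.
by move: hi; rewrite -(prednK m0) ltnS leqNgt h.
Qed.

Lemma sum_last (V : zmodType) m (hm : (0 < m)%N) (F : 'I_m -> V) :
  \sum_(i < m) F i = \sum_(i < m | (i < m.-1)%N) F i + F (lastIdx hm).
Proof.
rewrite (bigD1 (lastIdx hm)) //= addrC; congr (_ + _); apply: eq_bigl => i.
by rewrite -val_eqE /= not_last.
Qed.

Lemma sum_but_last (V : zmodType) m (hm : (0 < m)%N) (F : 'I_m -> V) (j : 'I_m) :
  (j < m.-1)%N ->
  \sum_(i < m | i != j) F i =
  \sum_(i < m | (i < m.-1)%N && (i != j)) F i + F (lastIdx hm).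
Proof.
move=> hj.
have nj : lastIdx hm != j by rewrite -val_eqE /= neq_ltn hj orbT.
rewrite (bigD1 (lastIdx hm)) //= addrC; congr (_ + _); apply: eq_bigl => i.
by rewrite -val_eqE /= not_last // andbC.
Qed.

Lemma Ssub_sub (R : realType) (m l : nat) (n : 'I_m -> nat)
  (A : forall i : 'I_m, 'M[R]_(l, n i)) (j : 'I_m) (u v : blk R n) :
  Ssub A j (fun i => u i - v i) = Ssub A j u - Ssub A j v.
Proof.
by rewrite /Ssub -sumrB; apply: eq_bigr => i _; rewrite mulmxBr.
Qed.

Lemma G1inner (R : realType) (m l : nat) (n : 'I_m -> nat)
  (A : forall i : 'I_m, 'M[R]_(l, n i)) (rho : R) (v u : blk R n) (j : 'I_m) :
  \sum_(i < m | (i < m.-1)%N && (i != j)) dotv (v j) ((- rho) *: ((A j)^T *m (A i *m u i)))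
  = - rho * dotv (A j *m v j) (Ssub A j u).
Proof.
rewrite /Ssub dotv_sumr mulr_sumr; apply: eq_bigr => i _.
by rewrite dotvZr dotv_mul trmxK.
Qed.

Lemma dotvTr (R : realType) p q (M : 'M[R]_(p,q)) (u : 'cV[R]_q) (v : 'cV[R]_p) :
  dotv u (M^T *m v) = dotv (M *m u) v.
Proof. by rewrite dotv_mul trmxK. Qed.
Lemma sumR_split (V : zmodType) m (F : 'I_m -> V) (j : 'I_m) :
  (j < m.-1)%N ->
  \sum_(i < m | (i < m.-1)%N) F i = F j + \sum_(i < m | (i < m.-1)%N && (i != j)) F i.
Proof. by move=> hj; rewrite (bigD1 j). Qed.

Theorem lemma4p2 (R : realType) (m l : nat) (n : 'I_m -> nat)
  (hm : (2 <= m)%N) (hl : (0 < l)%N) (hn : forall i, (0 < n i)%N)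
  (theta : forall i : 'I_m, 'cV[R]_(n i) -> R)
  (X : forall i : 'I_m, set 'cV[R]_(n i))
  (A : forall i : 'I_m, 'M[R]_(l, n i)) (b : 'cV[R]_l)
  (P : forall i : 'I_m, 'M[R]_(n i)) (rho gamma : R)
  (x : nat -> blk R n) (y : nat -> 'cV[R]_l) :
  (* standing assumptions on problem (P) *)
  (forall i, convex_fun (theta i)) ->
  (forall i, X i !=set0) ->
  (forall i, closed (X i)) ->
  (forall i, convex_set (X i)) ->
  (forall i, \rank (A i) = n i) ->
  (* (P) has a nonempty solution set *)
  (exists us : blk R n, (forall i, X i (us i)) /\ Asum A us = b /\
     forall u : blk R n, (forall i, X i (u i)) -> Asum A u = b ->
       theta_sum theta us <= theta_sum theta u) ->
  (* W^* is nonempty *)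
  (exists (xs : blk R n) (ys : 'cV[R]_l), (forall i, X i (xs i)) /\
     forall (u : blk R n) (yy : 'cV[R]_l), (forall i, X i (u i)) ->
       0 <= theta_sum theta u - theta_sum theta xs
            + \sum_(i < m) dotv (u i - xs i) (- ((A i)^T *m ys))
            + dotv (yy - ys) (Asum A xs - b)) ->
  (* parameters *)
  0 < rho -> 0 < gamma -> gamma < 2 ->
  (forall i, spd (P i)) ->
  (forall v : blk R n, (exists i : 'I_m, (i < m.-1)%N /\ v i != 0) ->
     0 < G1form A P rho v v) ->
  (* w^0 in W *)
  (forall i, X i (x 0%N i)) ->
  (* L-GADMM iteration *)
  (forall (k : nat) (j : 'I_m), (j < m.-1)%N ->
     X j (x k.+1 j) /\
     forall z : 'cV[R]_(n j), X j z ->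
       theta j (x k.+1 j)
         + rho / 2 * sqnorm (A j *m x k.+1 j + Asum_but A j (x k) - b - rho^-1 *: y k)
         + 1 / 2 * sqnormG (P j) (x k.+1 j - x k j)
       <= theta j z
         + rho / 2 * sqnorm (A j *m z + Asum_but A j (x k) - b - rho^-1 *: y k)
         + 1 / 2 * sqnormG (P j) (z - x k j)) ->
  (forall k : nat,
     let im := lastIdx (ltnW hm) in
     X im (x k.+1 im) /\
     forall z : 'cV[R]_(n im), X im z ->
       theta im (x k.+1 im)
         + rho / 2 * sqnorm (gamma *: Asum_R A (x k.+1)
                             + (1 - gamma) *: (b - A im *m x k im)
                             + A im *m x k.+1 im - b - rho^-1 *: y k)
         + 1 / 2 * sqnormG (P im) (x k.+1 im - x k im)
       <= theta im z
         + rho / 2 * sqnorm (gamma *: Asum_R A (x k.+1)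
                             + (1 - gamma) *: (b - A im *m x k im)
                             + A im *m z - b - rho^-1 *: y k)
         + 1 / 2 * sqnormG (P im) (z - x k im)) ->
  (forall k : nat,
     let im := lastIdx (ltnW hm) in
     y k.+1 = y k - rho *: (gamma *: Asum_R A (x k.+1)
                            + (1 - gamma) *: (b - A im *m x k im)
                            + A im *m x k.+1 im - b)) ->
  (* conclusion, with the auxiliary sequence wbar^k *)
  let im := lastIdx (ltnW hm) in
  let xbar := fun k : nat => x k.+1 in
  let ybar := fun k : nat =>
    y k - rho *: (Asum_R A (x k.+1) + A im *m x k im - b) in
  forall k : nat,
    0 <= Qform (ltnW hm) A P rho gamma
           (fun i => xbar k i - xbar k.+1 i) (ybar k - ybar k.+1)
           (fun i => (x k i - x k.+1 i) - (xbar k i - xbar k.+1 i))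
           ((y k - y k.+1) - (ybar k - ybar k.+1)).
Proof.
move=> thc Xne Xcl Xcv Arank Psol Wsol rho0 g0 g2 Pspd G1pd X0 Hj Hm Hy im xbar ybar k.
have m0 : (0 < m)%N := ltnW hm.
have PT : forall i, (P i)^T = P i by move=> i; case: (Pspd i).
have rn0 : rho != 0 by rewrite gt_eqF.
pose r k' := fun i => x k' i - x k'.+1 i.
have VIR : forall k' (j : 'I_m), (j < m.-1)%N -> forall z, X j z ->
  0 <= theta j z - theta j (x k'.+1 j)
       + dotv (A j *m (z - x k'.+1 j)) (- ybar k' + rho *: Ssub A j (r k'))
       + dotv (z - x k'.+1 j) (P j *m (x k'.+1 j - x k' j)).
  move=> k' j hj z Xz.
  have [Xx Hx] := Hj k' j hj.
  have := @first_order R _ _ (theta j) (X j) (A j) (Asum_but A j (x k') - b - rho^-1 *: y k')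
    (P j) (x k' j) (x k'.+1 j) rho (thc j) (Xcv j) Xx (PT j) _ z Xz.
  have vid : rho *: (A j *m x k'.+1 j + (Asum_but A j (x k') - b - rho^-1 *: y k'))
     = - ybar k' + rho *: Ssub A j (r k').
    rewrite /ybar /Asum_but (sum_but_last (ltnW hm)) // /Asum_R (sumR_split _ hj) /r Ssub_sub.
    rewrite /Ssub -/im.
    apply/matrixP => a c; rewrite !mxE; field.
    done.
  rewrite -vid dotvZr; apply.
  by move=> z' Hz'; rewrite !addrA; exact: Hx.
have VIM : forall k' z, X im z ->
  0 <= theta im z - theta im (x k'.+1 im)
    + dotv (A im *m (z - x k'.+1 im))
        (- ybar k' - (1 - gamma) *: (y k' - ybar k') - rho *: (A im *m (x k' im - x k'.+1 im)))
    + dotv (z - x k'.+1 im) (P im *m (x k'.+1 im - x k' im)).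
  move=> k' z Xz.
  move: (Hm k') => /= [Xx Hx].
  pose c := gamma *: Asum_R A (x k'.+1) + (1 - gamma) *: (b - A im *m x k' im) - b - rho^-1 *: y k'.
  have cE : forall z', gamma *: Asum_R A (x k'.+1) + (1 - gamma) *: (b - A im *m x k' im)
                + A im *m z' - b - rho^-1 *: y k' = A im *m z' + c.
    by move=> z'; apply/matrixP => a e; rewrite /c !mxE; ring.
  have := @first_order R _ _ (theta im) (X im) (A im) c
    (P im) (x k' im) (x k'.+1 im) rho (thc im) (Xcv im) Xx (PT im) _ z Xz.
  have vid : rho *: (A im *m x k'.+1 im + c)
     = - ybar k' - (1 - gamma) *: (y k' - ybar k') - rho *: (A im *m (x k' im - x k'.+1 im)).
    rewrite /ybar /c mulmxBr.
    apply/matrixP => a e; rewrite !mxE; field.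
    done.
  rewrite -vid dotvZr; apply.
  by move=> z' Hz'; rewrite -!cE; exact: Hx.
pose dv := fun i => xbar k i - xbar k.+1 i.
pose ev := fun i => (x k i - x k.+1 i) - (xbar k i - xbar k.+1 i).
pose dy := ybar k - ybar k.+1.
pose ey := (y k - y k.+1) - (ybar k - ybar k.+1).
have YID : - (A im *m ev im) + rho^-1 *: ey = \sum_(i < m) A i *m dv i.
  rewrite /ev /ey /dv /xbar (eq_bigr (fun i => A i *m x k.+1 i - A i *m x k.+2 i));
    last by move=> i _; rewrite mulmxBr.
  rewrite sumrB !(sum_last (ltnW hm)) -/im /ybar /Asum_R !mulmxBr.
  apply/matrixP => a e; rewrite !mxE; field.
  done.
have BJ : forall j : 'I_m, (j < m.-1)%N ->
  0 <= dotv (dv j) (P j *m ev j)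
       + \sum_(i < m | (i < m.-1)%N && (i != j)) dotv (dv j) ((- rho) *: ((A j)^T *m (A i *m ev i)))
       + dotv dy (A j *m dv j).
  move=> j hj.
  rewrite G1inner.
  have eS : Ssub A j ev = Ssub A j (r k) - Ssub A j (r k.+1).
    by rewrite /Ssub -sumrB; apply: eq_bigr => i _; rewrite -mulmxBr.
  rewrite eS [dotv dy _]dotvC.
  have h1 := VIR k j hj (x k.+2 j) (Hj k.+1 j hj).1.
  have h2 := VIR k.+1 j hj (x k.+1 j) (Hj k j hj).1.
  move: h1 h2; rewrite /dv /ev /dy /xbar.
  rewrite !(mulmxBr, mulmxDr, mulmxN, dotvDl, dotvDr, dotvNl, dotvNr, dotvZl, dotvZr).
  lra.
have BM : 0 <= dotv (dv im) ((rho *: ((A im)^T *m A im) + P im) *m ev im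
                  + (1 - gamma) *: ((A im)^T *m ey)) + dotv dy (A im *m dv im).
  rewrite mulmxDl -scalemxAl -mulmxA !(dotvDr, dotvZr, dotvTr) [dotv dy _]dotvC.
  have h1 := VIM k (x k.+2 im) (Hm k.+1).1.
  have h2 := VIM k.+1 (x k.+1 im) (Hm k).1.
  move: h1 h2; rewrite /dv /ev /dy /ey /xbar.
  rewrite !(mulmxBr, mulmxDr, mulmxN, dotvDl, dotvDr, dotvNl, dotvNr, dotvZl, dotvZr).
  lra.
rewrite /Qform -/im -/dv -/ev -/dy -/ey /G1form YID dotv_sumr (sum_last (ltnW hm)) -/im.
have S1 : 0 <= \sum_(j < m | (j < m.-1)%N) (dotv (dv j) (P j *m ev j)
       + \sum_(i < m | (i < m.-1)%N && (i != j)) dotv (dv j) ((- rho) *: ((A j)^T *m (A i *m ev i)))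
       + dotv dy (A j *m dv j)).
  by apply: sumr_ge0 => j; exact: BJ.
rewrite !big_split /= in S1.
rewrite big_split /=.
move: BM; rewrite /dv /ev /=.
lra.
Qed.
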